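(* Let $X$ be a random variable over $\{0,1\}^n$ with $\mathrm{H}^{\delta}_\infty(X)<k$ (where $\delta\ge0$), let $Y$ be a random variable over $\{0,1\}^n$ with $\mathrm{H}_\infty(Y)\ge k$, and let $\{\mathsf{D}(x)\}_{x\in\{0,1\}^n}$ be $4$-wise independent random variables each uniform on $\{-1,1\}$. Then with probability at least $\frac1{17}$ over $\mathsf{D}$, $$\mathsf{Adv}^{\mathsf{D}}(X;Y)\ge\frac13\cdot2^{-k/2}\delta.$$
   Context: $P_X(x)=\Pr[X=x]$; $\mathsf{Adv}^{\mathsf{D}}(X;Y)=\big|\sum_x\mathsf{D}(x)(P_X(x)-P_Y(x))\big|$. Min-entropy: $\mathrm{H}_\infty(Y)=-\log_2\max_y P_Y(y)$. Statistical distance: $d_1(X;Y)=\frac12\sum_z|P_X(z)-P_Y(z)|$. Smooth min-entropy: $\mathrm{H}^{\delta}_\infty(X)=\max\{\mathrm{H}_\infty(Y): Y \text{ finitely supported},\ d_1(X;Y)\le\delta\}$. A family of random variables is $4$-wise independent if any $4$ of them with distinct indices are mutually independent. *)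

(* Defs.v *)
From HB Require Import structures.
From mathcomp Require Import all_boot all_order all_algebra.
From mathcomp Require Import all_classical all_reals all_analysis.
Set Implicit Arguments. Unset Strict Implicit. Unset Printing Implicit Defensive.
Import Order.TTheory GRing.Theory Num.Theory.
Local Open Scope ring_scope.

Section Defs.
Variable R : realType.

(* Universe of outcomes: bitstrings [seq bool].  A finitely supported
   distribution is a mass function P together with a duplicate-free list s
   containing its support. *)
Definition is_fsdist (P : seq bool -> R) (s : seq (seq bool)) : Prop :=
  [/\ uniq s, (forall z : seq bool, 0 <= P z), (forall z : seq bool, z \notin s -> P z = 0)
    & \sum_(z <- s) P z = 1].

Definition bits (n : nat) : seq (seq bool) :=
  [seq val x | x <- enum {: n.-tuple bool}].

Definition log2 (x : R) : R := ln x / ln 2.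

Definition Hmin (P : seq bool -> R) (s : seq (seq bool)) : R :=
  - log2 (\big[Num.max/0]_(z <- s) P z).

Definition d1 (P : seq bool -> R) (s : seq (seq bool)) (Q : seq bool -> R) (t : seq (seq bool)) : R :=
  2^-1 * \sum_(z <- undup (s ++ t)) `|P z - Q z|.

Definition is_smooth_minent (delta : R) (P : seq bool -> R) (s : seq (seq bool)) (h : R) : Prop :=
  (exists (Q : seq bool -> R) (t : seq (seq bool)),
      [/\ is_fsdist Q t, d1 P s Q t <= delta & Hmin Q t = h]) /\
  (forall (Q : seq bool -> R) (t : seq (seq bool)),
      is_fsdist Q t -> d1 P s Q t <= delta -> Hmin Q t <= h).

(* D is a random function {0,1}^n -> {-1,1}; b = true encodes +1 *)
Definition sgnb (b : bool) : R := if b then 1 else -1.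

Definition Prob (n : nat) (mu : {ffun n.-tuple bool -> bool} -> R)
    (A : pred {ffun n.-tuple bool -> bool}) : R :=
  \sum_(d | A d) mu d.

Definition is_pmf (n : nat) (mu : {ffun n.-tuple bool -> bool} -> R) : Prop :=
  (forall d, 0 <= mu d) /\ \sum_d mu d = 1.

Definition uniform_signs (n : nat) (mu : {ffun n.-tuple bool -> bool} -> R) : Prop :=
  forall (x : n.-tuple bool) (b : bool), Prob mu (fun d => d x == b) = 2^-1.

Definition fourwise_indep (n : nat) (mu : {ffun n.-tuple bool -> bool} -> R) : Prop :=
  forall (s : seq (n.-tuple bool)), uniq s -> (size s <= 4)%N ->
  forall (b : n.-tuple bool -> bool),
    Prob mu (fun d => all (fun x => d x == b x) s)
    = \prod_(x <- s) Prob mu (fun d => d x == b x).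

Definition Adv (n : nat) (d : {ffun n.-tuple bool -> bool})
    (PX PY : seq bool -> R) : R :=
  `| \sum_(x : n.-tuple bool) sgnb (d x) * (PX (val x) - PY (val x)) |.

End Defs.

(* Main.v *)
Require Import Defs.
From HB Require Import structures.
From mathcomp Require Import all_boot all_order all_algebra.
From mathcomp Require Import all_classical all_reals all_analysis.
From mathcomp Require Import ring lra.
Import Order.TTheory GRing.Theory Num.Theory.
Local Open Scope ring_scope.

Section Mom.
Variable R : realType.
Variable n : nat.
Variable mu : {ffun n.-tuple bool -> bool} -> R.
Hypothesis unif : uniform_signs mu.
Hypothesis ind4 : fourwise_indep mu.

Lemma prod_ind (d : {ffun n.-tuple bool -> bool}) (s : seq (n.-tuple bool)) :
  \prod_(x <- s) ((d x)%:R : R) = (all (fun x => d x == true) s)%:R.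
Proof.
elim: s => [|x s IH]; first by rewrite big_nil.
by rewrite big_cons IH /= eqb_id; case: (d x); rewrite ?mul1r ?mul0r.
Qed.

Lemma probE (A : pred {ffun n.-tuple bool -> bool}) :
  Prob mu A = \sum_d mu d * (A d)%:R.
Proof.
rewrite /Prob big_mkcond /=; apply: eq_bigr => d _.
by case: (A d); rewrite ?mulr1 ?mulr0.
Qed.

Lemma sgnbE (b : bool) : sgnb R b = 2 * (b%:R : R) - 1 :> R.
Proof. by case: b => /=; ring. Qed.

Lemma momG (S Tl : seq (n.-tuple bool)) :
  uniq (Tl ++ S) -> (size (Tl ++ S) <= 4)%N ->
  \sum_d mu d * (\prod_(x <- Tl) ((d x)%:R : R) * \prod_(x <- S) sgnb R (d x))
  = 2^-1 ^+ size Tl * (S == [::])%:R.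
Proof.
elim: S Tl => [|x0 S IH] Tl.
  rewrite cats0 => uT sT.
  under eq_bigr do rewrite big_nil mulr1 prod_ind.
  rewrite -probE ind4 // mulr1.
  rewrite (eq_bigr (fun _ => 2^-1)); last by move=> x _; exact: unif.
  by rewrite big_const_seq count_predT; elim: (size Tl) => [|m IHm]; rewrite ?expr0 //= IHm exprS.
move=> uT sT.
have uT' : uniq ((x0 :: Tl) ++ S).
  have pp : perm_eq ([:: x0] ++ Tl ++ S) (Tl ++ [:: x0] ++ S) by rewrite -(perm_catCA Tl [:: x0] S) perm_refl.
  by rewrite (perm_uniq pp).
have sT' : (size ((x0 :: Tl) ++ S) <= 4)%N by move: sT; rewrite !size_cat /= addnS.
have uT'' : uniq (Tl ++ S) by move: uT'; rewrite /= => /andP[].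
have sT'' : (size (Tl ++ S) <= 4)%N by apply: leq_trans sT'; rewrite /= leqnSn.
have e1 := IH _ uT' sT'. have e2 := IH _ uT'' sT''.
transitivity (2 * (\sum_d mu d * (\prod_(x <- x0 :: Tl) ((d x)%:R : R) * \prod_(x <- S) sgnb R (d x)))
   - \sum_d mu d * (\prod_(x <- Tl) ((d x)%:R : R) * \prod_(x <- S) sgnb R (d x))).
  rewrite mulr_sumr -sumrB; apply: eq_bigr => d _.
  rewrite !big_cons sgnbE; ring.
rewrite e1 e2 /= exprS mulr0; case: (S == [::]); rewrite ?mulr1 ?mulr0 ?subrr //.
idtac.
by rewrite mulrA divff ?mul1r ?subrr // pnatr_eq0.
Qed.

Lemma sgnbX (b : bool) (c : nat) : sgnb R b ^+ c = if odd c then sgnb R b else 1.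
Proof.
case: b => /=; first by rewrite expr1n; case: (odd c).
by rewrite -signr_odd; case: (odd c).
Qed.

Lemma momL (L : seq (n.-tuple bool)) : (size L <= 4)%N ->
  \sum_d mu d * \prod_(x <- L) sgnb R (d x)
  = (all (fun v => ~~ odd (count_mem v L)) L)%:R.
Proof.
move=> sL.
set p := fun v => odd (count_mem v L).
have uS : uniq ([::] ++ [seq v <- undup L | p v]) by rewrite /= filter_uniq ?undup_uniq.
have sS : (size ([::] ++ [seq v <- undup L | p v]) <= 4)%N.
  rewrite /= size_filter; apply: leq_trans (count_size _ _) _.
  by apply: leq_trans (size_undup _) sL.
have -> : all (fun v => ~~ odd (count_mem v L)) L = ([seq v <- undup L | p v] == [::]).
  rewrite -[_ == _]negbK -has_filter (eq_has_r (mem_undup L)).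
  by rewrite -all_predC.
have := momG _ [::] uS sS; rewrite expr0 mul1r => <-.
apply: eq_bigr => d _; rewrite big_nil mul1r; congr (_ * _).
rewrite -prodr_undup_exp_count big_filter [RHS]big_mkcond /=.
by apply: eq_bigr => v _; rewrite sgnbX.
Qed.

Ltac crush := repeat match goal with
 | |- context[?a == ?a] => rewrite eqxx
 | H : is_true (?a != ?b) |- context[?a == ?b] => rewrite (negbTE H)
 | H : is_true (?a != ?b) |- context[?b == ?a] => rewrite [b == a]eq_sym (negbTE H)
 | |- context[?a == ?b] => case: (eqVneq a b) => [?|?]; [subst|]
end.

Lemma mom2 (x y : n.-tuple bool) :
  \sum_d mu d * (sgnb R (d x) * sgnb R (d y)) = (x == y)%:R.
Proof.
have := momL [:: x; y] isT.
under eq_bigr do rewrite !big_cons big_nil mulr1.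
move=> ->; congr (_%:R).
by rewrite /=; crush.

Qed.

Lemma mom4 (x y z w : n.-tuple bool) :
  \sum_d mu d * (sgnb R (d x) * sgnb R (d y) * sgnb R (d z) * sgnb R (d w)) =
  (x == y)%:R * (z == w)%:R + (x == z)%:R * (y == w)%:R + (x == w)%:R * (y == z)%:R
  - 2 * ((x == y)%:R * (x == z)%:R * (x == w)%:R).
Proof.
have -> : \sum_d mu d * (sgnb R (d x) * sgnb R (d y) * sgnb R (d z) * sgnb R (d w))
  = \sum_d mu d * \prod_(v <- [:: x; y; z; w]) sgnb R (d v).
  by apply: eq_bigr => d _; rewrite !big_cons big_nil mulr1 !mulrA.
rewrite momL //.
rewrite /=; crush; rewrite /= ?mulr1n ?mulr0n; lra.
Qed.

Lemma sum_pred1 (F : n.-tuple bool -> R) (z : n.-tuple bool) :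
  \sum_w (z == w)%:R * F w = F z.
Proof.
rewrite (bigD1 z) //= eqxx mul1r big1 ?addr0 // => w nwz.
by rewrite eq_sym (negbTE nwz) mul0r.
Qed.

Definition Q4 (f : n.-tuple bool -> n.-tuple bool -> n.-tuple bool -> n.-tuple bool -> R) :=
  \sum_x \sum_z \sum_y \sum_w f x y z w.

Lemma Q4_ext f g : (forall x y z w, f x y z w = g x y z w) -> Q4 f = Q4 g.
Proof.
move=> e; rewrite /Q4; do 4 (apply: eq_bigr => ? _); exact: e.
Qed.

Lemma Q4D f g : Q4 (fun x y z w => f x y z w + g x y z w) = Q4 f + Q4 g.
Proof.
rewrite /Q4 -big_split; apply: eq_bigr => x _.
rewrite -big_split; apply: eq_bigr => z _.
rewrite -big_split; apply: eq_bigr => y _.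
by rewrite -big_split.
Qed.

Lemma Q4Z c f : Q4 (fun x y z w => c * f x y z w) = c * Q4 f.
Proof.
rewrite /Q4 mulr_sumr; apply: eq_bigr => x _.
rewrite mulr_sumr; apply: eq_bigr => z _.
rewrite mulr_sumr; apply: eq_bigr => y _.
by rewrite mulr_sumr.
Qed.

Lemma Q4_ge0 f : (forall x y z w, 0 <= f x y z w) -> 0 <= Q4 f.
Proof.
move=> h; rewrite /Q4; do 4 (apply: sumr_ge0 => ? _); exact: h.
Qed.

Variable a : n.-tuple bool -> R.
Let A := \sum_x a x ^+ 2.

Lemma Q4_t1 : Q4 (fun x y z w => (x == y)%:R * ((z == w)%:R * (a x * a y * a z * a w))) = A ^+ 2.
Proof.
rewrite /Q4 expr2 big_distrlr /=; apply: eq_bigr => x _; apply: eq_bigr => z _.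
rewrite (eq_bigr (fun y => (x == y)%:R * (a x * a y * a z * a z))); last first.
  by move=> y _; rewrite -mulr_sumr sum_pred1.
by rewrite sum_pred1 !expr2; ring.
Qed.

Lemma Q4_t2 : Q4 (fun x y z w => (x == z)%:R * ((y == w)%:R * (a x * a y * a z * a w))) = A ^+ 2.
Proof.
rewrite /Q4 expr2 big_distrlr /=; apply: eq_bigr => x _.
rewrite (eq_bigr (fun z => (x == z)%:R * (a x * a z * A))); last first.
  move=> z _; rewrite (eq_bigr (fun y => (x == z)%:R * (a x * a y * a z * a y))); last first.
    by move=> y _; rewrite -mulr_sumr sum_pred1.
  rewrite -mulr_sumr; congr (_ * _). rewrite /A big_distrr /=; apply: eq_bigr => y _; rewrite expr2; ring.
rewrite sum_pred1 /A mulr_sumr; apply: eq_bigr => z _; rewrite !expr2; ring.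
Qed.

Lemma Q4_t3 : Q4 (fun x y z w => (x == w)%:R * ((y == z)%:R * (a x * a y * a z * a w))) = A ^+ 2.
Proof.
rewrite /Q4 expr2 big_distrlr /=; apply: eq_bigr => x _.
apply: eq_bigr => z _.
rewrite (eq_bigr (fun y => (y == z)%:R * (a x * a y * a z * a x))); last first.
  move=> y _; under eq_bigr do rewrite mulrCA.
  by rewrite -mulr_sumr sum_pred1.
under eq_bigr do rewrite eq_sym.
by rewrite sum_pred1 !expr2; ring.
Qed.

Lemma Q4_t4 : 0 <= Q4 (fun x y z w => (x == y)%:R * (x == z)%:R * (x == w)%:R * (a x * a y * a z * a w)).
Proof.
apply: Q4_ge0 => x y z w.
case: (eqVneq x y) => [<-|]; last by rewrite !mul0r.
case: (eqVneq x z) => [<-|]; last by rewrite !mulr0 !mul0r.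
case: (eqVneq x w) => [<-|]; last by rewrite !mulr0 !mul0r.
rewrite ?eqxx !mul1r -mulrA; apply: mulr_ge0; rewrite -expr2 ?sqr_ge0 //.
Qed.

Definition Zs (d : {ffun n.-tuple bool -> bool}) := \sum_x sgnb R (d x) * a x.

Lemma exch_mu (F : {ffun n.-tuple bool -> bool} -> n.-tuple bool -> R) :
  \sum_d mu d * \sum_x F d x = \sum_x \sum_d mu d * F d x.
Proof.
rewrite (eq_bigr (fun d => \sum_x mu d * F d x)); last by move=> d _; rewrite mulr_sumr.
exact: (exchange_big _ _ _ _ _ (fun d x => mu d * F d x)).
Qed.

Lemma EZ2 : \sum_d mu d * Zs d ^+ 2 = A.
Proof.
under eq_bigr do rewrite /Zs expr2 big_distrlr /=.
rewrite exch_mu; apply: eq_bigr => x _.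
rewrite exch_mu.
rewrite (eq_bigr (fun y => (x == y)%:R * (a x * a y))); last first.
  move=> y _; rewrite -mom2 mulr_suml; apply: eq_bigr => d _; ring.
by rewrite sum_pred1 expr2.
Qed.

Lemma EZ4 : \sum_d mu d * Zs d ^+ 4 <= 3 * A ^+ 2.
Proof.
have -> : \sum_d mu d * Zs d ^+ 4 = Q4 (fun x y z w => a x * a y * a z * a w *
  ((x == y)%:R * (z == w)%:R + (x == z)%:R * (y == w)%:R + (x == w)%:R * (y == z)%:R
  - 2 * ((x == y)%:R * (x == z)%:R * (x == w)%:R))).
  under eq_bigr do rewrite (_ : 4 = 2 + 2)%N // exprD /Zs expr2 big_distrlr /= big_distrlr /=.
  rewrite /Q4 exch_mu; apply: eq_bigr => x _.
  rewrite exch_mu; apply: eq_bigr => z _.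
  under eq_bigr do rewrite big_distrlr /=.
  rewrite exch_mu; apply: eq_bigr => y _.
  rewrite exch_mu; apply: eq_bigr => w _.
  rewrite -mom4 mulr_sumr; apply: eq_bigr => d _; ring.
rewrite (@Q4_ext _ (fun x y z w =>
  (x == y)%:R * ((z == w)%:R * (a x * a y * a z * a w)) +
  (x == z)%:R * ((y == w)%:R * (a x * a y * a z * a w)) +
  (x == w)%:R * ((y == z)%:R * (a x * a y * a z * a w)) +
  (-2) * ((x == y)%:R * (x == z)%:R * (x == w)%:R * (a x * a y * a z * a w)))); last first.
  by move=> x y z w; ring.
rewrite !Q4D Q4Z Q4_t1 Q4_t2 Q4_t3.
have := Q4_t4; lra.
Qed.
End Mom.
Section Ent.
Variable R : realType.

Lemma max_ge (P : seq bool -> R) s z : z \in s -> P z <= \big[Num.max/0]_(y <- s) P y.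
Proof.
elim: s => //= y s IH; rewrite inE big_cons => /orP[/eqP->|/IH h].
  by rewrite le_max lexx.
by rewrite le_max h orbT.
Qed.

Lemma max_le (P : seq bool -> R) s c : 0 <= c -> (forall z, z \in s -> P z <= c) ->
  \big[Num.max/0]_(y <- s) P y <= c.
Proof.
move=> c0; elim: s => [|y s IH] h; first by rewrite big_nil.
rewrite big_cons ge_max h ?mem_head //= IH // => z zs; by apply: h; rewrite inE zs orbT.
Qed.

Lemma max_gt0 (P : seq bool -> R) s : \sum_(z <- s) P z = 1 -> 0 < \big[Num.max/0]_(y <- s) P y.
Proof.
move=> s1; rewrite ltNge; apply/negP => hM.
have : \sum_(z <- s | z \in s) P z <= \sum_(z <- s | z \in s) (0:R).
  apply: ler_sum => z zs; exact: le_trans (max_ge P _ _ zs) hM.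
by rewrite -[X in X <= _]big_seq s1 big1 // ler10.
Qed.

Lemma Hmin_ge (M k : R) : 0 < M -> (k <= - log2 M) = (M <= 2 `^ (-k)).
Proof.
move=> M0; have l2 : 0 < ln (2:R) by apply: ln_gt0; lra.
rewrite /log2 -mulNr ler_pdivlMr // lerNr -ler_ln ?posrE ?powR_gt0 //.
by rewrite ln_powR mulNr.
Qed.

Lemma sum_bits n (F : seq bool -> R) : \sum_(z <- bits n) F z = \sum_(x : n.-tuple bool) F (val x).
Proof. by rewrite /bits big_map big_enum. Qed.

Lemma uniq_bits n : uniq (bits n).
Proof. by rewrite /bits map_inj_uniq ?enum_uniq //; exact: val_inj. Qed.

Lemma val_bits n (x : n.-tuple bool) : val x \in bits n.
Proof. by rewrite /bits map_f ?mem_enum. Qed.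


Lemma undup_bits2 n : undup (bits n ++ bits n) = bits n.
Proof.
rewrite undup_cat (undup_id (uniq_bits n)).
have -> : [seq x <- bits n | x \notin bits n] = [::] by apply/eqP; rewrite -(negbK (_ == _)) -has_filter; apply/hasPn => x ->.
by [].
Qed.

Variables (n : nat) (k delta h : R) (PX PY : seq bool -> R).
Hypothesis d0 : 0 <= delta.
Hypothesis PX0 : forall z, 0 <= PX z.
Hypothesis PX1 : \sum_(x : n.-tuple bool) PX (val x) = 1.
Hypothesis PY1 : \sum_(x : n.-tuple bool) PY (val x) = 1.
Hypothesis PYle : forall x : n.-tuple bool, PY (val x) <= 2 `^ (-k).
Hypothesis smooth : forall (Q : seq bool -> R) (t : seq (seq bool)),
      is_fsdist Q t -> d1 PX (bits n) Q t <= delta -> Hmin Q t <= h.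
Hypothesis hk : h < k.

Let p := 2 `^ (-k) : R.
Let mz (z : seq bool) := if p < PX z then p else PX z.
Let e (x : n.-tuple bool) := PX (val x) - mz (val x).
Let E := \sum_x e x.

Lemma p_gt0 : 0 < p. Proof. by apply: powR_gt0; lra. Qed.

Lemma mz_ge0 z : 0 <= mz z.
Proof. rewrite /mz; case: ifP => // _; exact: ltW p_gt0. Qed.
Lemma mz_lep z : mz z <= p.
Proof. rewrite /mz; case: ifP => // /negbT; rewrite -leNgt //. Qed.
Lemma e_ge0 x : 0 <= e x.
Proof. rewrite /e /mz; case: ifP => [/ltW|]; lra. Qed.
Lemma E_ge0 : 0 <= E.
Proof. by apply: sumr_ge0 => x _; exact: e_ge0. Qed.

Lemma E_gt : delta < E.
Proof.
rewrite ltNge; apply/negP => hE.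
set Dn := \sum_(x : n.-tuple bool) (p - mz (val x)).
set lam := E / Dn.
have sum_mz : \sum_(x : n.-tuple bool) mz (val x) = 1 - E.
  by rewrite /E /e sumrB PX1; lra.
have DnE : E <= Dn.
  apply: le_trans (_ : \sum_(x : n.-tuple bool) (PY (val x) - mz (val x)) <= Dn).
    by rewrite sumrB PY1 sum_mz; lra.
  by apply: ler_sum => x _; have := PYle x; rewrite -/p; lra.
have E0 := E_ge0.
have lamD : lam * Dn = E.
  case: (eqVneq Dn 0) => [D0|Dn0]; last by rewrite /lam divfK.
  by rewrite /lam D0 invr0 !mulr0; apply/eqP; rewrite eq_le E0 -D0 DnE.
have lam0 : 0 <= lam by rewrite /lam divr_ge0 // (le_trans E0 DnE).
have lam1 : lam <= 1.
  case: (eqVneq Dn 0) => [D0|Dn0]; first by rewrite /lam D0 invr0 mulr0 ler01.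
  have Dp : 0 < Dn by rewrite lt_def Dn0 (le_trans E0 DnE).
  by rewrite /lam ler_pdivrMr // mul1r.
pose Q (z : seq bool) := if z \in bits n then mz z + lam * (p - mz z) else 0.
have Qv (x : n.-tuple bool) : Q (val x) = mz (val x) + lam * (p - mz (val x)).
  by rewrite /Q val_bits.
have fsQ : is_fsdist Q (bits n).
  split; first exact: uniq_bits.
  - move=> z; rewrite /Q; case: ifP => // _.
    by apply: addr_ge0; [exact: mz_ge0 | apply: mulr_ge0 => //; have := mz_lep z; lra].
  - by move=> z /negbTE; rewrite /Q => ->.
  rewrite sum_bits; under eq_bigr do rewrite Qv.
  by rewrite big_split /= -mulr_sumr -/Dn lamD sum_mz; lra.
have d1Q : d1 PX (bits n) Q (bits n) <= delta.
  rewrite /d1 undup_bits2 sum_bits.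
  apply: le_trans hE.
  have : \sum_(x : n.-tuple bool) `|PX (val x) - Q (val x)| <= \sum_(x : n.-tuple bool) (e x + lam * (p - mz (val x))).
    apply: ler_sum => x _; rewrite Qv.
    have -> : PX (val x) - (mz (val x) + lam * (p - mz (val x))) = e x - lam * (p - mz (val x)) by rewrite /e; ring.
    apply: le_trans (ler_normB _ _) _.
    rewrite (ger0_norm (e_ge0 x)) ger0_norm //; apply: mulr_ge0 => //; have := mz_lep (val x); lra.
  rewrite big_split /= -mulr_sumr -/Dn lamD -/E; lra.
have hQ := smooth _ _ fsQ d1Q.
have Qs : \sum_(z <- bits n) Q z = 1 by case: fsQ.
have MQ0 := max_gt0 _ _ Qs.
have : k <= Hmin Q (bits n).
  rewrite /Hmin Hmin_ge //; apply: max_le; first exact: ltW p_gt0.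
  move=> z; rewrite /Q => ->.
  have := mz_lep z; have := mz_ge0 z; rewrite -/p; nra.
move=> H; have := le_lt_trans hQ hk; by rewrite ltNge H.
Qed.

Lemma A_ge : E ^+ 2 * p <= \sum_(x : n.-tuple bool) (PX (val x) - PY (val x)) ^+ 2.
Proof.
pose c (x : n.-tuple bool) : R := if p < PX (val x) then 1 else 0.
pose lam := E * p.
have p0 := p_gt0.
have h1 x : e x ^+ 2 <= (PX (val x) - PY (val x)) ^+ 2.
  have := PYle x; rewrite -/p /e /mz; case: (boolP (p < PX (val x))) => hp hy /=.
    have hp' := ltW hp; nra.
  by rewrite subrr expr0n /= sqr_ge0.
have h2 x : 2 * lam * e x - lam ^+ 2 * c x <= e x ^+ 2.
  rewrite /c /e /mz; case: (boolP (p < PX (val x))) => hp /=.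
    have := sqr_ge0 (PX (val x) - p - lam); rewrite !expr2 mulr1; lra.
  by rewrite subrr !mulr0 subrr expr0n.
have h3 x : p * c x <= PX (val x).
  rewrite /c; case: (boolP (p < PX (val x))) => hp /=; first by rewrite mulr1 ltW.
  by rewrite mulr0.
have S1 : p * \sum_x c x <= 1.
  by rewrite -PX1 mulr_sumr; apply: ler_sum => x _; exact: h3.
have S0 : 0 <= \sum_x c x by apply: sumr_ge0 => x _; rewrite /c; case: ifP.
have : 2 * lam * E - lam ^+ 2 * \sum_x c x <= \sum_x e x ^+ 2.
  rewrite /E mulr_sumr mulr_sumr -sumrB; apply: ler_sum => x _; exact: h2.
have : \sum_x e x ^+ 2 <= \sum_(x : n.-tuple bool) (PX (val x) - PY (val x)) ^+ 2.
  by apply: ler_sum => x _; exact: h1.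
rewrite /lam -/E.
set S := \sum_x c x in S0 S1 *.
have E0 := E_ge0.
have hint : 0 <= E ^+ 2 * p * (1 - p * S).
  apply: mulr_ge0; [apply: mulr_ge0; [exact: sqr_ge0 | exact: ltW p0] | lra].
nra.
Qed.

End Ent.

Theorem corollary5 (R : realType) (n : nat) (k delta : R)
  (PX PY : seq bool -> R) (mu : {ffun n.-tuple bool -> bool} -> R) :
  0 <= delta ->
  is_fsdist PX (bits n) ->
  (exists h : R, is_smooth_minent delta PX (bits n) h /\ h < k) ->
  is_fsdist PY (bits n) ->
  k <= Hmin PY (bits n) ->
  is_pmf mu -> uniform_signs mu -> fourwise_indep mu ->
  1 / 17 <= Prob mu (fun d => 3^-1 * (2 `^ (- k / 2)) * delta <= Adv d PX PY).
Proof.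
move=> d0 [uX X0 Xout X1] [h [[_ sm] hk]] [uY Y0 Yout Y1] kY [mu0 mu1] unif ind4.
have PX1 : \sum_(x : n.-tuple bool) PX (val x) = 1 by rewrite -sum_bits.
have PY1 : \sum_(x : n.-tuple bool) PY (val x) = 1 by rewrite -sum_bits.
have PYle : forall x : n.-tuple bool, PY (val x) <= 2 `^ (- k).
  have MY := max_gt0 _ _ _ Y1.
  move: kY; rewrite /Hmin Hmin_ge // => hM x.
  exact: le_trans (max_ge _ PY _ _ (val_bits _ x)) hM.
pose a := fun x : n.-tuple bool => PX (val x) - PY (val x).
pose A := \sum_x a x ^+ 2.
have [E [Egt Age]] : exists E, delta < E /\ E ^+ 2 * 2 `^ (- k) <= A.
  eexists; split; [exact: (@E_gt R n k delta h PX PY X0 PX1 PY1 PYle sm hk)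
                  | exact: (@A_ge R n k PX PY X0 PX1 PYle)].
set p := 2 `^ (- k) in Age PYle *.
set q := 2 `^ (- k / 2).
have p0 : 0 < p by apply: powR_gt0; lra.
have q0 : 0 <= q by apply: powR_ge0.
have qq : q * q = p.
  rewrite /q /p -powRD; last by rewrite pnatr_eq0 implybT.
  by congr (_ `^ _); field.
set t := 3^-1 * q * delta.
have t0 : 0 <= t by rewrite /t; apply: mulr_ge0 => //; apply: mulr_ge0 => //; rewrite invr_ge0; lra.
have t2 : 9 * t ^+ 2 <= A.
  have -> : 9 * t ^+ 2 = delta ^+ 2 * p by rewrite /t -qq; field.
  apply: le_trans Age; apply: ler_wpM2r; first exact: ltW.
  rewrite !expr2; nra.
have A0 : 0 < A.
  apply: lt_le_trans Age; apply: mulr_gt0 => //; rewrite expr2; nra.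
set iA := (8 * A)^-1.
have iAA : iA * A = 8^-1 by rewrite /iA invfM mulrAC -mulrA divff ?mulr1 // gt_eqF.
have iA0 : 0 <= iA by rewrite /iA invr_ge0; lra.
pose Z := Zs R n a.
have ptw d : mu d * Z d ^+ 2 <=
   t ^+ 2 * mu d + 2 * A * (mu d * ((t <= `|Z d|)%R)%:R) + iA * (mu d * Z d ^+ 4).
  have hb : Z d ^+ 2 <= t ^+ 2 + 2 * A * ((t <= `|Z d|)%R)%:R + iA * Z d ^+ 4.
    case: (boolP (t <= `|Z d|)) => hev /=.
      rewrite mulr1.
      have : 0 <= 8 * A * (2 * A + iA * Z d ^+ 4 - Z d ^+ 2).
        have -> : 8 * A * (2 * A + iA * Z d ^+ 4 - Z d ^+ 2) = (Z d ^+ 2 - 4 * A) ^+ 2.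
          rewrite /iA; field; rewrite gt_eqF //.
        exact: sqr_ge0.
      rewrite pmulr_rge0; last lra.
      have : 0 <= t ^+ 2 by exact: sqr_ge0.
      lra.
    rewrite mulr0 addr0.
    have hz : Z d ^+ 2 <= t ^+ 2.
      rewrite -real_normK ?num_real //; rewrite -ltNge in hev.
      rewrite !expr2; have := normr_ge0 (Z d); nra.
    have : 0 <= iA * Z d ^+ 4 by apply: mulr_ge0 => //; rewrite (_ : 4 = 2 * 2)%N // exprM sqr_ge0.
    lra.
  have := ler_wpM2l (mu0 d) hb; lra.
have sumB : \sum_d mu d * Z d ^+ 2 <= \sum_d (t ^+ 2 * mu d + 2 * A * (mu d * ((t <= `|Z d|)%R)%:R) + iA * (mu d * Z d ^+ 4)).
  by apply: ler_sum => d _; exact: ptw.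
rewrite big_split big_split /= -!mulr_sumr mu1 (EZ2 _ _ _ unif ind4) -/A in sumB.
rewrite probE.
set P := \sum_d mu d * _ in sumB *.
have E4 := EZ4 _ _ _ unif ind4 a.
have E4' : iA * \sum_d mu d * Zs R n a d ^+ 4 <= 3 / 8 * A.
  apply: le_trans (ler_wpM2l iA0 E4) _.
  have -> : iA * (3 * A ^+ 2) = 3 * A * (iA * A) by ring.
  by rewrite iAA; lra.
have : 37 / 72 * A <= 2 * A * P by lra.
move=> H; nra.
Qed.
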